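(* Let $(\Delta,\mathcal H)$ be a generic cut and $K_\Delta,K_+,K_-$ the associated simplicial complexes on $\widetilde{[m]}=[m]\cup\{o\}$ as defined below. Then $$K_+\cap K_-=\operatorname{star}_{K_+\cup K_-}(o)=\operatorname{star}_{K_+}(o)=\operatorname{star}_{K_-}(o),$$ $$(K_+\cup K_-)\setminus K_\Delta=O_{K_+\cup K_-}(o)=O_{K_+}(o)=O_{K_-}(o).$$
   Context: Let $\Delta\subset\mathbb R^n$ be an $n$-dimensional simple polytope $\Delta=\{x:\langle x,\lambda_i\rangle+\eta_i\ge0,\ i=1,\dots,m\}$ (bounding hyperplanes in general position), whose facets $H_i=\Delta\cap\{\langle x,\lambda_i\rangle+\eta_i=0\}$ are all nonempty. A generic cut is a hyperplane $\mathcal H=\{\langle x,\lambda_0\rangle+\xi=0\}$ such that $\mathcal H$ and the hyperplanes $\{\langle x,\lambda_i\rangle+\eta_i=0\}$ are in general position and $H_o:=\mathcal H\cap\Delta\ne\varnothing$. Set $\Delta_+=\Delta\cap\{\langle x,\lambda_0\rangle+\xi\ge0\}$, $\Delta_-=\Delta\cap\{\langle x,\lambda_0\rangle+\xi\le0\}$. Define simplicial complexes on $\widetilde{[m]}$: $K_\Delta=\{\sigma\subset[m]:\bigcap_{i\in\sigma}H_i\ne\varnothing\}\cup\{\varnothing\}$, $K_\pm=\{\sigma\subset\widetilde{[m]}:\bigcap_{i\in\sigma}(H_i\cap\Delta_\pm)\ne\varnothing\}\cup\{\varnothing\}$ (with $H_o$ the facet indexed by $o$). For a simplicial complex $K$ and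 a vertex $o$: $O_K(o)=\{\sigma\in K: o\in\sigma\}$, and $\operatorname{star}_K(o)$ is its closure, i.e. the set of all subsets of faces of $K$ containing $o$. *)

(* Defs.v *)
From HB Require Import structures.
From mathcomp Require Import all_boot all_order all_algebra.
From mathcomp Require Import boolp classical_sets.
Set Implicit Arguments. Unset Strict Implicit. Unset Printing Implicit Defensive.
Import Order.TTheory GRing.Theory Num.Theory.
Local Open Scope ring_scope.
Local Open Scope classical_set_scope.

Section Defs.
Variable R : realFieldType.
Variable n : nat.

Definition dotr (x y : 'rV[R]_n) : R := \sum_(j < n) x 0 j * y 0 j.

Definition hval (I : Type) (lam : I -> 'rV[R]_n) (eta : I -> R) (i : I)
  (x : 'rV[R]_n) : R := dotr x (lam i) + eta i.

Definition general_position (I : finType) (lam : I -> 'rV[R]_n) (eta : I -> R) :=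
  forall S : {set I},
    (exists x, forall i, i \in S -> hval lam eta i x = 0) ->
    forall c : I -> R, \sum_(i in S) c i *: lam i = 0 ->
    forall i, i \in S -> c i = 0.

Definition in_poly (m : nat) (lam : 'I_m -> 'rV[R]_n) (eta : 'I_m -> R)
  (x : 'rV[R]_n) := forall i, 0 <= hval lam eta i x.

(* Delta is an n-dimensional (nonempty interior) bounded polytope whose
   bounding hyperplanes are in general position (hence simple) and all of
   whose facets H_i are nonempty. *)
Definition simple_polytope (m : nat) (lam : 'I_m -> 'rV[R]_n) (eta : 'I_m -> R) :=
  [/\ general_position lam eta,
      (exists x, forall i, 0 < hval lam eta i x),
      (exists M : R, forall x, in_poly lam eta x -> forall j, `|x 0 j| <= M) &
      (forall i, exists x, in_poly lam eta x /\ hval lam eta i x = 0)].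

(* the extended family indexed by [m]~ = option 'I_m, None = o *)
Definition ext_lam (m : nat) (lam : 'I_m -> 'rV[R]_n) (lam0 : 'rV[R]_n) :
  option 'I_m -> 'rV[R]_n := fun i => if i is Some k then lam k else lam0.
Definition ext_eta (m : nat) (eta : 'I_m -> R) (xi : R) : option 'I_m -> R :=
  fun i => if i is Some k then eta k else xi.

Definition generic_cut (m : nat) (lam : 'I_m -> 'rV[R]_n) (eta : 'I_m -> R)
  (lam0 : 'rV[R]_n) (xi : R) :=
  general_position (ext_lam lam lam0) (ext_eta eta xi) /\
  exists x, in_poly lam eta x /\ dotr x lam0 + xi = 0.

(* K_Delta, as a complex on [m]~ (its faces avoid o) *)
Definition K_Delta (m : nat) (lam : 'I_m -> 'rV[R]_n) (eta : 'I_m -> R) :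
  set {set option 'I_m} :=
  [set s | s = finset.set0 \/
           (None \notin s /\
            exists x, in_poly lam eta x /\
                      forall i : 'I_m, Some i \in s -> hval lam eta i x = 0)].

(* K_+ (b = true) and K_- (b = false).  For i in [m], H_i cap Delta_pm is
   Delta_pm cap {h_i = 0}; for o, H_o cap Delta_pm = H_o = Delta cap H. *)
Definition K_half (m : nat) (lam : 'I_m -> 'rV[R]_n) (eta : 'I_m -> R)
  (lam0 : 'rV[R]_n) (xi : R) (b : bool) : set {set option 'I_m} :=
  [set s | s = finset.set0 \/
           exists x, [/\ in_poly lam eta x,
                         (if b then 0 <= dotr x lam0 + xi
                               else dotr x lam0 + xi <= 0) &
                         forall i, i \in s ->
                           hval (ext_lam lam lam0) (ext_eta eta xi) i x = 0]].

End Defs.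

Definition O_at (I : finType) (K : set {set I}) (o : I) : set {set I} :=
  [set s | K s /\ o \in s].
Definition star_at (I : finType) (K : set {set I}) (o : I) : set {set I} :=
  [set t | exists s, [/\ K s, o \in s & t \subset s]].

(* Main.v *)
Require Import Defs.
From HB Require Import structures.
From mathcomp Require Import all_boot all_order all_algebra.
From mathcomp Require Import boolp classical_sets.
Set Implicit Arguments. Unset Strict Implicit.
Import Order.TTheory GRing.Theory Num.Theory.
Local Open Scope ring_scope.
Local Open Scope classical_set_scope.

Section Aux.
Variables (R : realFieldType) (n m : nat).
Variables (lam : 'I_m -> 'rV[R]_n) (eta : 'I_m -> R) (lam0 : 'rV[R]_n) (xi : R).

Lemma dotr_aff (c d : R) (x z l : 'rV[R]_n) (e : R) : c + d = 1 ->
  dotr (c *: x + d *: z) l + e = c * (dotr x l + e) + d * (dotr z l + e).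
Proof.
move=> cd; rewrite /dotr.
have -> : \sum_(j < n) (c *: x + d *: z) 0 j * l 0 j =
  c * \sum_(j < n) x 0 j * l 0 j + d * \sum_(j < n) z 0 j * l 0 j.
  rewrite !mulr_sumr -big_split /=; apply: eq_bigr => j _.
  by rewrite !mxE mulrDl !mulrA.
by rewrite -{1}[e]mul1r -cd !mulrDr mulrDl addrACA.
Qed.

Definition PP (x : 'rV[R]_n) (s : {set option 'I_m}) :=
  [/\ in_poly lam eta x, dotr x lam0 + xi = 0 &
      forall i, i \in s -> hval (ext_lam lam lam0) (ext_eta eta xi) i x = 0].

Lemma PP_K b x s : PP x s -> K_half lam eta lam0 xi b s.
Proof.
case=> h1 h2 h3; right; exists x; split => //.
by case: b; rewrite h2.
Qed.

Lemma PP_KN b x s : PP x s -> K_half lam eta lam0 xi b (None |: s).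
Proof.
case=> h1 h2 h3; have H : PP x (None |: s).
  split => // i; by rewrite in_setU1 => /orP [/eqP -> //|]; apply: h3.
exact: PP_K H.
Qed.

Lemma K_PP b s : K_half lam eta lam0 xi b s -> None \in s -> exists x, PP x s.
Proof.
case=> [-> | [x [h1 h2 h3]]]; first by rewrite inE.
move=> hN; exists x; split => //; exact: (h3 None hN).
Qed.

Lemma star_PP (K : set {set option 'I_m}) t :
  (forall s, K s -> None \in s -> exists x, PP x s) ->
  (forall x s, PP x s -> K (None |: s)) ->
  star_at K None t <-> exists x, PP x t.
Proof.
move=> h1 h2; split.
  case=> s [Ks Ns ts]; have [x [p1 p2 p3]] := h1 s Ks Ns.
  exists x; split => // i it; apply: p3; exact: (fintype.subsetP ts i it).
case=> x Px; exists (None |: t); split; first exact: (h2 x).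
  by rewrite setU11.
exact: finset.subsetUr.
Qed.

Lemma O_PP (K : set {set option 'I_m}) t :
  (forall s, K s -> None \in s -> exists x, PP x s) ->
  (forall x s, PP x s -> K s) ->
  O_at K None t <-> (exists x, PP x t) /\ None \in t.
Proof.
move=> h1 h2; split; first by case=> Kt Nt; split => //; exact: h1.
by case=> [[x Px] Nt]; split => //; exact: (h2 x).
Qed.

Lemma U_PP s : (K_half lam eta lam0 xi true `|` K_half lam eta lam0 xi false) s ->
  None \in s -> exists x, PP x s.
Proof. by case; apply: K_PP. Qed.

End Aux.

Theorem lemma3p8 (R : realFieldType) (n m : nat)
  (lam : 'I_m -> 'rV[R]_n) (eta : 'I_m -> R) (lam0 : 'rV[R]_n) (xi : R) :
  simple_polytope lam eta ->
  generic_cut lam eta lam0 xi ->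
  [/\ K_half lam eta lam0 xi true `&` K_half lam eta lam0 xi false
        = star_at (K_half lam eta lam0 xi true `|` K_half lam eta lam0 xi false) None,
      star_at (K_half lam eta lam0 xi true `|` K_half lam eta lam0 xi false) None
        = star_at (K_half lam eta lam0 xi true) None &
      star_at (K_half lam eta lam0 xi true) None
        = star_at (K_half lam eta lam0 xi false) None] /\
  [/\ (K_half lam eta lam0 xi true `|` K_half lam eta lam0 xi false) `\` K_Delta lam eta
        = O_at (K_half lam eta lam0 xi true `|` K_half lam eta lam0 xi false) None,
      O_at (K_half lam eta lam0 xi true `|` K_half lam eta lam0 xi false) None
        = O_at (K_half lam eta lam0 xi true) None &
      O_at (K_half lam eta lam0 xi true) None
        = O_at (K_half lam eta lam0 xi false) None].
Proof.
move=> _ [_ [x0 [x0D x0H]]].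
set Kp := K_half lam eta lam0 xi true.
set Km := K_half lam eta lam0 xi false.
have stK b t : star_at (K_half lam eta lam0 xi b) None t <-> exists x, PP lam eta lam0 xi x t.
  apply: star_PP; [exact: K_PP | by move=> x s; apply: PP_KN].
have stU t : star_at (Kp `|` Km) None t <-> exists x, PP lam eta lam0 xi x t.
  apply: star_PP; [exact: U_PP | by move=> x s Px; left; apply: PP_KN Px].
have OK b t : O_at (K_half lam eta lam0 xi b) None t <->
    (exists x, PP lam eta lam0 xi x t) /\ None \in t.
  apply: O_PP; [exact: K_PP | by move=> x s; apply: PP_K].
have OU t : O_at (Kp `|` Km) None t <-> (exists x, PP lam eta lam0 xi x t) /\ None \in t.
  apply: O_PP; [exact: U_PP | by move=> x s Px; left; apply: PP_K Px].
have eqP' (A B : set {set option 'I_m}) : (forall t, A t <-> B t) -> A = B.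
  by move=> h; apply/seteqP; split => t /h.
split; split.
- apply: eqP' => t; rewrite stU; split; last first.
    by case=> x Px; split; apply: PP_K Px.
  case=> [[->|[xp [pD pS pH]]]].
    by move=> _; exists x0; split => // i; rewrite inE.
  case=> [->|[xm [mD mS mH]]].
    by exists x0; split => // i; rewrite inE.
  set a := dotr xp lam0 + xi in pS *; set b := - (dotr xm lam0 + xi).
  have b0 : 0 <= b by rewrite /b oppr_ge0.
  have [ab0|abn0] := eqVneq (a + b) 0.
    have a0 : a = 0.
      by move/eqP: ab0; rewrite (paddr_eq0 pS b0) => /andP [/eqP]. 
    by exists xp; split.
  pose c := b / (a + b); pose d := a / (a + b).
  have cd : c + d = 1 by rewrite /c /d -mulrDl addrC divff.
  have abp : 0 < a + b by rewrite lt_def abn0 addr_ge0.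
  have c0 : 0 <= c by rewrite /c divr_ge0 // ltW.
  have d0 : 0 <= d by rewrite /d divr_ge0 // ltW.
  exists (c *: xp + d *: xm); split.
  + move=> i; rewrite /hval dotr_aff //.
    by rewrite addr_ge0 // mulr_ge0 //; [apply: pD | apply: mD].
  + rewrite dotr_aff // -/a.
    have -> : dotr xm lam0 + xi = - b by rewrite opprK.
    by rewrite mulrN /c /d mulrAC [X in _ - X]mulrAC [b * a]mulrC subrr.
  + move=> i it; case: i it => [k|] it.
      rewrite /hval /= dotr_aff //.
      by move: (pH _ it) (mH _ it); rewrite /hval /= => -> ->; rewrite !mulr0 addr0.
    rewrite /hval /= dotr_aff //.
    by move: (pH _ it) (mH _ it); rewrite /hval /= => -> ->; rewrite !mulr0 addr0.
- by apply: eqP' => t; rewrite stU stK.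
- by apply: eqP' => t; rewrite !stK.
- apply: eqP' => t; rewrite OU; split.
    case=> Ut nD; have Nt : None \in t.
      case: (boolP (None \in t)) => // Nt; exfalso; apply: nD.
      case: Ut => [[->|[x [xD _ xH]]]|[->|[x [xD _ xH]]]].
      + by left.
      + by right; split => //; exists x; split => // i it; exact: (xH (Some i) it).
      + by left.
      + by right; split => //; exists x; split => // i it; exact: (xH (Some i) it).
    by split => //; apply: U_PP Ut Nt.
  case=> [[x Px] Nt]; split; first by left; apply: PP_K Px.
  case=> [te|[nN _]]; last by rewrite Nt in nN.
  by rewrite te inE in Nt.
- by apply: eqP' => t; rewrite OU OK.
- by apply: eqP' => t; rewrite !OK.
Qed.
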